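(* Let $(X,d)$ be a metric space and let $U\subseteq F_{USCG}(X)$. Then $U$ is relatively compact in $(F_{USCG}(X),H_{\rm end})$ if and only if $U(\alpha)=\bigcup_{u\in U}[u]_\alpha$ is relatively compact in $X$ for each $\alpha\in(0,1]$.
   Context: A fuzzy set on $X$ is a function $u:X\to[0,1]$, with $\alpha$-cuts $[u]_\alpha=\{x: u(x)\ge\alpha\}$ for $\alpha\in(0,1]$ and $[u]_0=\overline{\{u>0\}}$. $F_{USC}(X)$ is the set of fuzzy sets with all $\alpha$-cuts ($\alpha\in[0,1]$) non-empty and closed; $F_{USCG}(X)=\{u\in F_{USC}(X): [u]_\alpha\text{ compact for all }\alpha\in(0,1]\}$. $X\times[0,1]$ is metrized by $\overline{d}((x,\alpha),(y,\beta))=d(x,y)+|\alpha-\beta|$; ${\rm end}\,u=\{(x,t)\in X\times[0,1]: u(x)\ge t\}$; $H_{\rm end}(u,v)=H({\rm end}\,u,{\rm end}\,v)$ where $H$ is the Hausdorff distance $H(A,B)=\max\{\sup_{a\in A}\inf_{b\in B}\overline{d}(a,b),\sup_{b\in B}\inf_{a\in A}\overline{d}(a,b)\}$. *)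

(* Defs.v *)
From HB Require Import structures.
From mathcomp Require Import all_boot all_order all_algebra.
From mathcomp Require Import all_classical all_reals ereal.
Set Implicit Arguments. Unset Strict Implicit. Unset Printing Implicit Defensive.
Import Order.TTheory GRing.Theory Num.Theory.
Local Open Scope classical_set_scope.
Local Open Scope ring_scope.

Section MetricNotions.
Variable R : realType.

Definition is_metric (X : Type) (d : X -> X -> R) : Prop :=
  (forall x y, d x y = 0 <-> x = y) /\
  (forall x y, d x y = d y x) /\
  (forall x y z, d x z <= d x y + d y z).

Definition dopen (T : Type) (D : T -> T -> \bar R) (A : set T) : Prop :=
  forall x, A x -> exists e : R, 0 < e /\ [set y | (D x y < e%:E)%E] `<=` A.

Definition dclosed (T : Type) (D : T -> T -> \bar R) (A : set T) : Prop :=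
  dopen D (~` A).

Definition dclosure (T : Type) (D : T -> T -> \bar R) (A : set T) : set T :=
  [set x | forall e : R, 0 < e -> exists y, A y /\ (D x y < e%:E)%E].

Definition dcompact (T : Type) (D : T -> T -> \bar R) (K : set T) : Prop :=
  forall (I : Type) (G : I -> set T), (forall i, dopen D (G i)) ->
    K `<=` \bigcup_i G i ->
    exists F : set I, finite_set F /\ K `<=` \bigcup_(i in F) G i.

Definition drelcompact (T : Type) (D : T -> T -> \bar R) (A : set T) : Prop :=
  dcompact D (dclosure D A).

Variables (X : Type) (d : X -> X -> R).

Definition dE : X -> X -> \bar R := fun x y => (d x y)%:E.

Definition fuzzy_set (u : X -> R) : Prop := forall x, 0 <= u x <= 1.

Definition cut (u : X -> R) (a : R) : set X :=
  if a == 0 then dclosure dE [set x | 0 < u x] else [set x | a <= u x].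

Definition F_USC (u : X -> R) : Prop :=
  fuzzy_set u /\
  (forall a : R, 0 <= a <= 1 -> cut u a !=set0 /\ dclosed dE (cut u a)).

Definition F_USCG (u : X -> R) : Prop :=
  F_USC u /\ (forall a : R, 0 < a <= 1 -> dcompact dE (cut u a)).

Definition FUSCG := {u : X -> R | F_USCG u}.

Definition endo (u : X -> R) : set (X * R) :=
  [set p | 0 <= p.2 <= 1 /\ p.2 <= u p.1].

Definition dbar (p q : X * R) : R := d p.1 q.1 + `|p.2 - q.2|.

Definition hexcess (A B : set (X * R)) : \bar R :=
  ereal_sup [set ereal_inf [set (dbar a b)%:E | b in B] | a in A].

Definition Hausdorff (A B : set (X * R)) : \bar R :=
  Order.max (hexcess A B) (hexcess B A).

Definition H_end (u v : X -> R) : \bar R := Hausdorff (endo u) (endo v).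

Definition H_end_FUSCG (u v : FUSCG) : \bar R := H_end (proj1_sig u) (proj1_sig v).

Definition Ucut (U : set FUSCG) (a : R) : set X :=
  \bigcup_(u in U) cut (proj1_sig u) a.

End MetricNotions.

(* Main.v *)
Require Import Defs.
From mathcomp Require Import all_boot all_order all_algebra.
From mathcomp Require Import all_classical all_reals ereal.
From mathcomp Require Import lra.
Import Order.TTheory GRing.Theory Num.Theory.
Local Open Scope classical_set_scope.
Local Open Scope ring_scope.
Set Implicit Arguments. Unset Strict Implicit. Unset Printing Implicit Defensive.

Definition rk {R : realType} (k : nat) : R := (k.+1%:R)^-1.

Lemma rk_gt0 {R : realType} k : 0 < @rk R k.
Proof. by rewrite /rk invr_gt0 ltr0n. Qed.

Lemma rk_le {R : realType} m n : (n <= m)%N -> @rk R m <= rk n.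
Proof. by move=> h; rewrite /rk lef_pV2 ?posrE ?ltr0n // ler_nat ltnS. Qed.

Lemma rk_small {R : realType} (e : R) : 0 < e -> exists k0, forall k, (k0 <= k)%N -> rk k < e.
Proof.
move=> e0; exists (Num.bound e^-1) => k hk.
apply: (le_lt_trans (rk_le hk)).
have h0 : 0 <= e^-1 by rewrite invr_ge0 ltW.
have h := archi_boundP h0.
rewrite /rk -[X in X < _]div1r ltr_pdivrMr ?ltr0n //.
have h2 : e^-1 < (Num.bound e^-1).+1%:R.
  apply: (lt_le_trans h); by rewrite ler_nat.
by rewrite -ltr_pdivrMl // mulr1.
Qed.

Lemma finite_bound (I : Type) (F : set I) (g : I -> nat) :
  finite_set F -> exists M, forall i, F i -> (g i <= M)%N.
Proof.
move=> /(finite_image g) /finite_fsetP [B hB].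
exists (\max_(j <- finmap.enum_fset B) j)%N => i Fi.
have : (g @` F) (g i) by exists i.
rewrite hB /= => iB.
exact: (@leq_bigmax_seq _ (finmap.enum_fset B) xpredT id).
Qed.

Section Gen.
Variables (R : realType) (T : Type) (dl : T -> T -> R).
Hypothesis dl0 : forall x, dl x x = 0.
Hypothesis dlC : forall x y, dl x y = dl y x.
Hypothesis dlT : forall x y z, dl x z <= dl x y + dl y z.
Let D : T -> T -> \bar R := fun x y => (dl x y)%:E.

Lemma dl_ge0 x y : 0 <= dl x y.
Proof. have := dlT x y x; rewrite dl0 (dlC y x) => h; lra. Qed.

Lemma Dlt x y e : (D x y < e%:E)%E = (dl x y < e).
Proof. by rewrite /D lte_fin. Qed.

Lemma ball_open x r : dopen D [set y | dl x y < r].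
Proof.
move=> y /= hy; exists (r - dl x y); split; first by rewrite subr_gt0.
move=> z /=; rewrite Dlt => hz; have := dlT x y z; lra.
Qed.

Lemma closureP A x : dclosure D A x <-> forall e, 0 < e -> exists y, A y /\ dl x y < e.
Proof.
by split=> H e e0; have [y [Ay h]] := H e e0; exists y; split => //.
Qed.

Lemma sub_closure A : A `<=` dclosure D A.
Proof. by move=> x Ax; apply/closureP => e e0; exists x; rewrite dl0. Qed.

Lemma closure_closure A : dclosure D (dclosure D A) `<=` dclosure D A.
Proof.
move=> x /closureP H; apply/closureP => e e0.
have e2 : 0 < e / 2 by rewrite divr_gt0.
have [y [/closureP Hy h1]] := H _ e2.
have [z [Az h2]] := Hy _ e2.
exists z; split => //; have := dlT x y z; lra.
Qed.

Lemma closure_closed A : dclosed D (dclosure D A).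
Proof.
move=> x nx.
have [e [e0 He]] : exists e, 0 < e /\ forall y, A y -> e <= dl x y.
  apply: contrapT => H; apply: nx; apply/closureP => e e0.
  apply: contrapT => H2; apply: H; exists e; split => // y Ay.
  rewrite leNgt; apply/negP => lt; apply: H2; by exists y.
exists (e / 2); split; first by rewrite divr_gt0.
move=> z /=; rewrite Dlt => hz /closureP Hz.
have e2 : 0 < e / 2 by rewrite divr_gt0.
have [y [Ay hy]] := Hz _ e2.
have := He _ Ay; have := dlT x z y; lra.
Qed.

Lemma closed_closure C : dclosed D C -> dclosure D C `<=` C.
Proof.
move=> hC x /closureP Hx; apply: contrapT => nx.
have [e [e0 He]] := hC x nx.
have [y [Cy hy]] := Hx _ e0.
by apply: (He y) => //=; rewrite Dlt.
Qed.

Lemma closed_closureE C : dclosed D C -> dclosure D C = C.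
Proof.
move=> hC; apply/seteqP; split; [exact: closed_closure|exact: sub_closure].
Qed.

Definition cluster (x : nat -> T) y :=
  forall e, 0 < e -> forall N, exists n, (N <= n)%N /\ dl (x n) y < e.
Definition seqrc (A : set T) :=
  forall x : nat -> T, (forall n, A (x n)) -> exists y, cluster x y.
Definition cauchy (x : nat -> T) :=
  forall e, 0 < e -> exists N, forall m n, (N <= m)%N -> (N <= n)%N -> dl (x m) (x n) < e.
Definition conv (x : nat -> T) y :=
  forall e, 0 < e -> exists N, forall n, (N <= n)%N -> dl (x n) y < e.
Definition tb (A : set T) :=
  forall r, 0 < r -> exists l : seq T, forall x, A x -> has (fun p => dl p x < r) l.
Definition ccomp (A : set T) :=
  forall x : nat -> T, (forall n, A (x n)) -> cauchy x -> exists y, conv x y.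

Lemma cluster_closure A x y : (forall n, A (x n)) -> cluster x y -> dclosure D A y.
Proof.
move=> Ax cl; apply/(closureP A y) => e e0; have [n [_ h]] := cl e e0 0%N.
by exists (x n); split => //; rewrite dlC.
Qed.

Lemma compact_cluster K : dcompact D K ->
  forall x : nat -> T, (forall n, K (x n)) -> exists y, K y /\ cluster x y.
Proof.
move=> cK x Kx; apply: contrapT => H.
have H' : forall y, exists eN : R * nat, K y ->
    0 < eN.1 /\ forall n, (eN.2 <= n)%N -> eN.1 <= dl (x n) y.
  move=> y; apply: contrapT => H1; apply: H; exists y.
  have Ky : K y.
    apply: contrapT => nK; apply: H1; exists (1, 0%N) => Ky; by case: nK.
  split => // e e0 N; apply: contrapT => H2; apply: H1; exists (e, N) => _.
  split => // n Nn; rewrite leNgt; apply/negP => lt; apply: H2; by exists n.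
have [f hf] := choice H'.
pose G := fun y => [set z | K y /\ dl y z < (f y).1].
have [F [fF cov]] : exists F : set T, finite_set F /\ K `<=` \bigcup_(i in F) G i.
  apply: cK.
  - move=> y z [Ky hz]; have := ball_open hz; move=> [e [e0 sub]].
    by exists e; split => // w /sub hw.
  - move=> z Kz; have [h0 _] := hf z Kz; exists z => //; split => //; by rewrite dl0.
have [M hM] := finite_bound (fun i => (f i).2) fF.
have [i Fi [Ki hi]] := cov _ (Kx M).
have [_ h2] := hf i Ki.
have := h2 M (hM i Fi); rewrite dlC; lra.
Qed.

Lemma relcompact_seqrc A : drelcompact D A -> seqrc A.
Proof.
move=> rc x Ax; have [y [_ cl]] := compact_cluster rc (fun n => sub_closure (Ax n)).
by exists y.
Qed.

Lemma seqrc_cc A : seqrc A -> ccomp A.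
Proof.
move=> sA x Ax cx; have [y cl] := sA x Ax; exists y => e e0.
have e2 : 0 < e / 2 by rewrite divr_gt0.
have [N HN] := cx _ e2; exists N => m Nm.
have [n [Nn hn]] := cl _ e2 N.
have := HN m n Nm Nn; have := dlT (x m) (x n) y; lra.
Qed.

Lemma seqrc_tb A : seqrc A -> tb A.
Proof.
move=> sA r r0; apply: contrapT => H.
have H' : forall l : seq T, exists x, A x /\ ~~ has (fun p => dl p x < r) l.
  move=> l; apply: contrapT => H1; apply: H; exists l => x Ax.
  apply: contrapT => nh; apply: H1; exists x; split => //; exact/negP.
have [g hg] := choice H'.
pose s := fix s (n : nat) : seq T := if n is n'.+1 then g (s n') :: s n' else [::].
pose x n := g (s n).
have Ax n : A (x n) by case: (hg (s n)).
have hmem : forall k m, (k < m)%N -> forall P : pred T, P (x k) -> has P (s m).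
  move=> k; elim=> [//|m IH] km P Pk /=.
  move: km; rewrite ltnS leq_eqVlt => /orP [/eqP km|km].
    by subst k; rewrite /x in Pk; rewrite Pk.
  by rewrite IH ?orbT.
have sep : forall n k, (k < n)%N -> r <= dl (x k) (x n).
  move=> n k kn; have [_ hn] := hg (s n).
  rewrite leNgt; apply/negP => lt; move: hn => /negP; apply.
  exact: (hmem k n kn (fun p => dl p (x n) < r)).
have [y cl] := sA x Ax.
have r2 : 0 < r / 2 by rewrite divr_gt0.
have [n1 [_ h1]] := cl _ r2 0%N.
have [n2 [h12 h2]] := cl _ r2 n1.+1.
have := sep n2 n1 h12; have := dlT (x n1) y (x n2); rewrite (dlC y); lra.
Qed.

Lemma tb_cc_relcompact A : tb A -> ccomp A -> drelcompact D A.
Proof.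
move=> tA cA I G oG cov.
set K := dclosure D A in cov *.
pose NC S := ~ exists F : set I, finite_set F /\ S `<=` \bigcup_(i in F) G i.
apply: contrapT => nc.
have NCne : forall S, NC S -> exists z, S z.
  move=> S nS; apply: contrapT => ne; apply: nS; exists set0; split; first exact: finite_set0.
  by move=> z Sz; case: ne; exists z.
have [t0 _] := NCne K nc.
have realstep : forall S k, S `<=` K -> NC S -> exists p, NC (S `&` [set z | dl p z < rk k]).
  move=> S k SK nS.
  have rk2 : 0 < (rk k : R) / 2 by rewrite divr_gt0 ?rk_gt0.
  have [l hl] := tA _ rk2.
  apply: contrapT => H.
  have H1 : forall p, exists F : set I, finite_set F /\
      S `&` [set z | dl p z < rk k] `<=` \bigcup_(i in F) G i.
    by move=> p; apply: contrapT => hp; apply: H; exists p.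
  have [Fp hFp] := choice H1.
  have cl : forall l' : seq T, exists F : set I, finite_set F /\ forall z, S z ->
      has (fun p => dl p z < rk k) l' -> exists2 i, F i & G i z.
    elim=> [|p l' [F' [fF' hF']]]; first by exists set0; split => //; exact: finite_set0.
    exists (Fp p `|` F'); split; first by rewrite finite_setU; split => //; case: (hFp p).
    move=> z Sz /= /orP [hp|hl'].
      have [i Fi Gi] := (hFp p).2 z (conj Sz hp).
      by exists i => //; left.
    have [i Fi Gi] := hF' z Sz hl'.
    by exists i => //; right.
  have [F [fF hF]] := cl l.
  apply: nS; exists F; split => // z Sz.
  have /closureP Kz := SK z Sz.
  have [a [Aa ha]] := Kz _ rk2.
  apply: hF => //; apply: sub_has (hl a Aa) => p /= hp.
  have := dlT p a z; rewrite (dlC a z); lra.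
have step' : forall Sk : set T * nat, exists p, Sk.1 `<=` K -> NC Sk.1 ->
    NC (Sk.1 `&` [set z | dl p z < rk Sk.2]).
  move=> [S k]; case: (pselect (S `<=` K /\ NC S)) => [[SK nS]|no].
    by have [p hp] := realstep S k SK nS; exists p.
  by exists t0 => SK nS; case: no.
have [pk hpk] := choice step'.
pose Sq := fix Sq (k : nat) : set T :=
  if k is k'.+1 then Sq k' `&` [set z | dl (pk (Sq k', k')) z < rk k'] else K.
have inv : forall k, Sq k `<=` K /\ NC (Sq k).
  elim=> [|k [SK nS]]; first by split.
  split; first by move=> z [Sz _]; exact: SK z Sz.
  exact: (hpk (Sq k, k) SK nS).
have decr : forall m n, (n <= m)%N -> Sq m `<=` Sq n.
  move=> m n; elim: m => [|m IH] hnm.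
    by move: hnm; rewrite leqn0 => /eqP ->.
  move: hnm; rewrite leq_eqVlt => /orP [/eqP ->//|hnm].
  by move=> z [Sz _]; apply: IH.
have [q hq] := choice (fun k => NCne _ (inv k).2).
have ha : forall k, exists a, A a /\ dl (q k) a < rk k.
  move=> k; have /closureP Kq := (inv k).1 _ (hq k).
  exact: Kq _ (rk_gt0 k).
have [a hA] := choice ha.
have ca : cauchy a.
  move=> e e0; have e4 : 0 < e / 4 by rewrite divr_gt0.
  have [k0 hk0] := rk_small e4.
  exists k0.+1 => m n hm hn.
  have qm : dl (pk (Sq k0, k0)) (q m) < rk k0 by case: (decr _ _ hm _ (hq m)).
  have qn : dl (pk (Sq k0, k0)) (q n) < rk k0 by case: (decr _ _ hn _ (hq n)).
  have hm' := hk0 m (ltnW hm); have hn' := hk0 n (ltnW hn).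
  have hk := hk0 k0 (leqnn _).
  have := (hA m).2; have := (hA n).2.
  have := dlT (a m) (q m) (a n); have := dlT (q m) (q n) (a n).
  have := dlT (q m) (pk (Sq k0, k0)) (q n).
  rewrite (dlC (a m) (q m)) (dlC (q m) (pk _)); lra.
have [y cy] := cA a (fun k => (hA k).1) ca.
have Ky : K y.
  apply/closureP => e e0; have [N hN] := cy e e0.
  by exists (a N); split; [exact: (hA N).1 | rewrite dlC; exact: hN].
have [i _ Giy] := cov y Ky.
have [eps [eps0 sub]] := oG i y Giy.
have e4 : 0 < eps / 4 by rewrite divr_gt0.
have [k1 hk1] := rk_small e4.
have [N2 hN2] := cy _ e4.
set k := maxn k1 N2.
apply: (inv k.+1).2; exists [set i]; split; first exact: finite_set1.
move=> z Sz; exists i => //; apply: sub; rewrite /= Dlt.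
have hz : dl (pk (Sq k, k)) z < rk k by case: Sz.
have hqk : dl (pk (Sq k, k)) (q k.+1) < rk k by case: (hq k.+1).
have hak := (hA k.+1).2.
have hy := hN2 k.+1 (leq_trans (leq_maxr _ _) (leqnSn _)).
have r1 := hk1 k (leq_maxl _ _).
have r2 := rk_le (R:=R) (leqnSn k).
have := dlT y (a k.+1) z; have := dlT (a k.+1) (q k.+1) z.
have := dlT (q k.+1) (pk (Sq k, k)) z.
have := dlC (a k.+1) y; have := dlC (q k.+1) (a k.+1).
have := dlC (pk (Sq k, k)) (q k.+1); lra.
Qed.

Lemma seqrc_relcompact A : seqrc A -> drelcompact D A.
Proof. by move=> sA; apply: tb_cc_relcompact; [exact: seqrc_tb|exact: seqrc_cc]. Qed.

End Gen.

Lemma absl {R : realType} (x e : R) : `|x| < e -> - e < x /\ x < e.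
Proof. by move/ltr_normlP => [h1 h2]; split => //; rewrite ltrNl. Qed.

Lemma absle {R : realType} (x c : R) : - c <= x -> x <= c -> `|x| <= c.
Proof. by move=> h1 h2; rewrite ler_norml h1 h2. Qed.

Section Main.
Variables (R : realType) (X : Type) (d : X -> X -> R).
Hypothesis hd : is_metric d.

Lemma d0 x : d x x = 0.
Proof. by case: hd => h _; apply/(h x x). Qed.
Lemma dC x y : d x y = d y x.
Proof. by case: hd => _ [h _]. Qed.
Lemma dT x y z : d x z <= d x y + d y z.
Proof. by case: hd => _ [_ h]. Qed.
Lemma d_ge0 x y : 0 <= d x y.
Proof. exact: (dl_ge0 d0 dC dT). Qed.

Lemma dbarE x t y s : dbar d (x, t) (y, s) = d x y + `|t - s|.
Proof. by []. Qed.

Lemma dbar_ge0 p q : 0 <= dbar d p q.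
Proof. by rewrite /dbar addr_ge0 ?d_ge0. Qed.

Lemma dbar0 p : dbar d p p = 0.
Proof. by rewrite /dbar d0 subrr normr0 addr0. Qed.

Lemma dbarT p q r : dbar d p r <= dbar d p q + dbar d q r.
Proof.
rewrite /dbar; have := dT p.1 q.1 r.1; have := ler_distD q.2 p.2 r.2; lra.
Qed.

Definition exc (A B : set (X * R)) (r : R) :=
  forall a, A a -> forall e, 0 < e -> exists b, B b /\ dbar d a b < r + e.

Lemma hex_le A B r : (hexcess d A B <= r%:E)%E <-> exc A B r.
Proof.
split.
- move=> H a Aa e e0.
  have h1 : (ereal_inf [set (dbar d a b)%:E | b in B] < (r + e)%:E)%E.
    apply: (le_lt_trans _ (_ : (r%:E < (r + e)%:E)%E)); last by rewrite lte_fin ltrDl.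
    apply: le_trans H; apply: ereal_sup_ubound; by exists a.
  have [y [b Bb <-]] := ereal_inf_lt h1.
  by rewrite lte_fin => hb; exists b.
- move=> H; apply: ge_ereal_sup => y [a Aa <-].
  apply/lee_addgt0Pr => e e0.
  have [b [Bb hb]] := H a Aa e e0.
  apply: ge_ereal_inf; exists (dbar d a b)%:E; first by exists b.
  by rewrite -EFinD lee_fin ltW.
Qed.

Lemma H_le u v r : (H_end d u v <= r%:E)%E <->
  exc (endo u) (endo v) r /\ exc (endo v) (endo u) r.
Proof.
rewrite /H_end /Hausdorff ge_max; split.
  by move=> /andP [/hex_le h1 /hex_le h2].
by move=> [/hex_le -> /hex_le ->].
Qed.

Lemma exc_trans A B C r1 r2 : exc A B r1 -> exc B C r2 -> exc A C (r1 + r2).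
Proof.
move=> h1 h2 a Aa e e0.
have e2 : 0 < e / 2 by rewrite divr_gt0.
have [b [Bb hb]] := h1 a Aa _ e2.
have [c [Cc hc]] := h2 b Bb _ e2.
exists c; split => //; have := dbarT a b c; lra.
Qed.

Lemma exc_refl A : exc A A 0.
Proof. by move=> a Aa e e0; exists a; split => //; rewrite dbar0 add0r. Qed.

Lemma exc_mono A B r1 r2 : r1 <= r2 -> exc A B r1 -> exc A B r2.
Proof.
move=> h H a Aa e e0; have [b [Bb hb]] := H a Aa e e0.
exists b; split => //; lra.
Qed.

Lemma fuzzy_of (u : FUSCG d) x : 0 <= proj1_sig u x <= 1.
Proof. case: u => f H /=; move: H => [[fz _] _]; exact: fz. Qed.

Lemma cutE (f : X -> R) a : a != 0 -> cut d f a = [set x | a <= f x].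
Proof. by move=> a0; rewrite /cut (negbTE a0). Qed.

Lemma one_of (u : FUSCG d) : exists x, 1 <= proj1_sig u x.
Proof.
case: u => f H; case: H => -[_ hc] _ /=.
have h01 : 0 <= (1:R) <= 1 by rewrite ler01 lexx.
have [[x hx] _] := hc 1 h01.
by exists x; move: hx; rewrite cutE ?oner_neq0.
Qed.

Local Notation val := (@proj1_sig _ _).

Lemma endoE (f : X -> R) x t : endo f (x, t) <-> (0 <= t <= 1 /\ t <= f x).
Proof. by []. Qed.

Lemma endo0 (u : FUSCG d) x : endo (val u) (x, 0).
Proof. by rewrite endoE lexx ler01; have /andP [] := fuzzy_of u x. Qed.

Lemma exc_top (f : X -> R) (u : FUSCG d) : exc (endo f) (endo (val u)) 1.
Proof.
move=> [x t] /endoE [/andP [t0 t1] _] e e0; exists (x, 0); split; first exact: endo0.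
rewrite dbarE d0 subr0 add0r ger0_norm //; lra.
Qed.

Lemma H_ge0 (u v : FUSCG d) : (0 <= H_end d (val u) (val v))%E.
Proof.
rewrite /H_end /Hausdorff le_max; apply/orP; left.
have [x _] := one_of u.
apply: le_ereal_sup_tmp; exists (ereal_inf [set (dbar d (x, 0) b)%:E | b in endo (val v)]).
  by exists (x, 0) => //; exact: endo0.
apply: le_ereal_inf_tmp => y [b _ <-]; by rewrite lee_fin dbar_ge0.
Qed.

Lemma H_le1 (u v : FUSCG d) : (H_end d (val u) (val v) <= 1%:E)%E.
Proof. by apply/H_le; split; exact: exc_top. Qed.

Definition h (u v : FUSCG d) : R := fine (H_end d (val u) (val v)).

Lemma hE u v : H_end_FUSCG u v = (h u v)%:E.
Proof.
rewrite /h /H_end_FUSCG; have := H_ge0 u v; have := H_le1 u v.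
by case: (H_end d _ _).
Qed.

Lemma h_le u v r : h u v <= r <-> exc (endo (val u)) (endo (val v)) r /\ exc (endo (val v)) (endo (val u)) r.
Proof. by rewrite -lee_fin -hE; exact: H_le. Qed.

Lemma h_ge0 u v : 0 <= h u v.
Proof. by rewrite -lee_fin -hE; exact: H_ge0. Qed.

Lemma h_lt u v e : h u v < e -> forall a, endo (val u) a -> exists b, endo (val v) b /\ dbar d a b < e.
Proof.
move=> lt a ea; have [h1 _] := (h_le u v (h u v)).1 (lexx _).
have e0 : 0 < e - h u v by rewrite subr_gt0.
have [b [eb hb]] := h1 a ea _ e0; exists b; split => //; lra.
Qed.

Lemma h0 u : h u u = 0.
Proof.
apply/eqP; rewrite eq_le h_ge0 andbT; apply/h_le; split; exact: exc_refl.
Qed.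

Lemma hC u v : h u v = h v u.
Proof.
apply/eqP; rewrite eq_le; apply/andP; split; apply/h_le.
  by have [h1 h2] := (h_le v u (h v u)).1 (lexx _).
by have [h1 h2] := (h_le u v (h u v)).1 (lexx _).
Qed.

Lemma hT u v w : h u w <= h u v + h v w.
Proof.
have [a1 a2] := (h_le u v (h u v)).1 (lexx _).
have [b1 b2] := (h_le v w (h v w)).1 (lexx _).
apply/h_le; split; first exact: exc_trans a1 b1.
by rewrite addrC; exact: exc_trans b2 a2.
Qed.

Lemma HendE : @H_end_FUSCG R X d = fun u v => (h u v)%:E.
Proof. by apply/funext => u; apply/funext => v; exact: hE. Qed.

Lemma UcutI (U : set (FUSCG d)) (u : FUSCG d) a x :
  U u -> 0 < a -> a <= val u x -> Ucut U a x.
Proof. by move=> Uu a0 hx; exists u => //; rewrite cutE ?gt_eqF. Qed.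

Lemma UcutP (U : set (FUSCG d)) a x :
  0 < a -> Ucut U a x -> exists u, U u /\ a <= val u x.
Proof. by move=> a0 [u Uu]; rewrite cutE ?gt_eqF // => hx; exists u. Qed.

Lemma cluster_shadow (x : nat -> X) (ny : nat -> nat * X) z :
  (forall k, (k <= (ny k).1)%N /\ d (x (ny k).1) (ny k).2 < rk k) ->
  cluster d (fun k => (ny k).2) z -> cluster d x z.
Proof.
move=> hny cl e e0 N.
have e2 : 0 < e / 2 by rewrite divr_gt0.
have [k0 hk0] := rk_small e2.
have [k [hk hz]] := cl _ e2 (maxn N k0).
have [kn hn] := hny k.
exists (ny k).1; split; first exact: leq_trans (leq_trans (leq_maxl _ _) hk) kn.
have := hk0 k (leq_trans (leq_maxr _ _) hk).
have := dT (x (ny k).1) (ny k).2 z; lra.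
Qed.

Lemma minP (a b : R) : 0 < a -> 0 < b ->
  0 < Num.min a b /\ Num.min a b <= a /\ Num.min a b <= b.
Proof.
move=> a0 b0; split; first by rewrite lt_min a0 b0.
by split; rewrite ge_min lexx ?orbT.
Qed.

Lemma forward (U : set (FUSCG d)) :
  drelcompact (@H_end_FUSCG R X d) U ->
  forall a, 0 < a <= 1 -> drelcompact (dE d) (Ucut U a).
Proof.
rewrite HendE => rc a /andP [a0 a1].
have sU := relcompact_seqrc h0 hC hT rc.
change (drelcompact (fun x y => (d x y)%:E) (Ucut U a)).

apply: (seqrc_relcompact dC dT) => x hx.
have hx' : forall n, exists u, U u /\ a <= val u (x n).
  by move=> n; apply: UcutP.
have [us hus] := choice hx'.
have [u cl] := sU us (fun n => (hus n).1).
have a2 : 0 < a / 2 by rewrite divr_gt0.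
have a2' : 0 < a / 2 <= 1 by rewrite a2 /=; lra.
have cpt : dcompact (dE d) (cut d (val u) (a / 2)) := (proj2_sig u).2 _ a2'.
have hny : forall k, exists ny : nat * X,
    ((k <= ny.1)%N /\ d (x ny.1) ny.2 < rk k) /\ cut d (val u) (a / 2) ny.2.
  move=> k; have [ep0 [ep1 ep2]] := minP a2 (rk_gt0 (R:=R) k).
  have [n [kn hn]] := cl _ ep0 k.
  have ea : endo (val (us n)) (x n, a).
    by rewrite endoE a1 (ltW a0) (hus n).2.
  have [[y s] [/endoE [_ ey] hb]] := h_lt hn ea.
  exists (n, y); rewrite dbarE in hb; split.
    split => //; have := normr_ge0 (a - s); lra.
  rewrite cutE ?gt_eqF //=.
  have [hs1 hs2] := absl (le_lt_trans (ler_wpDl (d_ge0 _ _) (lexx _)) hb).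
  lra.
have [ny hny'] := choice hny.
have [z [_ clz]] := compact_cluster d0 dC dT cpt (fun k => (hny' k).2).
exists z; apply: (cluster_shadow (ny := ny)) => // k; exact: (hny' k).1.
Qed.

Lemma level (e t : R) (M : nat) : 0 < e -> 0 <= t -> t < M%:R * e ->
  exists j, (j < M)%N /\ j%:R * e <= t /\ t < j%:R * e + e.
Proof.
move=> e0 t0; elim: M => [|M IH] ht.
  by move: ht; rewrite mul0r => ht; lra.
case: (ltP t (M%:R * e)) => htM.
  by have [j [jM hj]] := IH htM; exists j; split => //; apply: ltnW.
exists M; split => //; split => //; move: ht; by rewrite -natr1 mulrDl mul1r.
Qed.

Lemma tb_U (U : set (FUSCG d)) :
  (forall a, 0 < a <= 1 -> seqrc d (Ucut U a)) -> tb h U.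
Proof.
move=> H r r0.
case: (pselect (exists u0, U u0)) => [[u0 Uu0]|nU]; last first.
  by exists [::] => u Uu; case: nU; exists u.
have r4 : 0 < r / 4 by rewrite divr_gt0.
have [ε [ε0 [εr ε1]]] : exists ε : R, 0 < ε /\ ε <= r / 4 /\ ε <= 1.
  by exists (Num.min (r / 4) 1); exact: minP r4 ltr01.
have ε01 : 0 < ε <= 1 by rewrite ε0 ε1.
have [P hP] := seqrc_tb dC dT (H ε ε01) ε0.
set M := Num.bound ε^-1.
have hM : 1 < M%:R * ε.
  have h0' : 0 <= ε^-1 by rewrite invr_ge0 ltW.
  by have := archi_boundP h0'; rewrite -ltr_pdivrMr // div1r.
pose Pt := in_tuple P.
pose c (u : FUSCG d) : {set 'I_(size P) * 'I_M} :=
  finset (fun ij : 'I_(size P) * 'I_M =>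
    `[< exists x, d (tnth Pt ij.1) x < ε /\ (ij.2)%:R * ε <= val u x >]).
have key : forall u v, U u -> c u = c v -> exc (endo (val u)) (endo (val v)) (3 * ε).
  move=> u v Uu cuv [x t] /endoE [/andP [t0 t1] tu] e e0.
  case: (ltP t ε) => tε.
    exists (x, 0); split; first exact: endo0.
    rewrite dbarE d0 subr0 add0r ger0_norm //; lra.
  have Ux : Ucut U ε x := UcutI Uu ε0 (le_trans tε tu).
  have /(has_nthP x) [i iP hi] := hP x Ux.
  have [j [jM [j1 j2]]] := level ε0 t0 (le_lt_trans t1 hM).
  pose ij : 'I_(size P) * 'I_M := (Ordinal iP, Ordinal jM).
  have : ij \in c u.
    rewrite inE; apply/asboolP; exists x; split => /=.
      by rewrite (tnth_nth x).
    exact: le_trans j1 tu.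
  rewrite cuv inE => /asboolP [y [hy1 hy2]].
  move: hy1 hy2; rewrite /= (tnth_nth x) => hy1 hy2.
  have hy1b : d (nth x P i) y < ε := hy1.
  have jge0 : 0 <= j%:R * ε by rewrite mulr_ge0 // ltW.
  exists (y, j%:R * ε); split.
    by rewrite endoE jge0 (le_trans j1 t1).
  rewrite dbarE ger0_norm ?subr_ge0 //.
  have := dT x (nth x P i) y; rewrite (dC x (nth x P i)); lra.
have spec : forall γ : {set 'I_(size P) * 'I_M}, exists v, U v /\
    ((exists u, U u /\ c u = γ) -> c v = γ).
  move=> γ; case: (pselect (exists u, U u /\ c u = γ)) => [[u [Uu cu]]|no].
    by exists u; split.
  by exists u0; split => // ex; case: no.
have [rep hrep] := choice spec.
exists (map rep (enum {set 'I_(size P) * 'I_M})) => u Uu.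
rewrite has_map; apply/hasP; exists (c u); first by rewrite mem_enum.
have [Ur cr] := hrep (c u).
have cr' := cr (ex_intro _ u (conj Uu erefl)).
have : h (rep (c u)) u <= 3 * ε.
  by apply/h_le; split; apply: key => //.
rewrite /=; lra.
Qed.

Lemma cc_U (U : set (FUSCG d)) :
  (forall a, 0 < a <= 1 -> seqrc d (Ucut U a)) -> ccomp h U.
Proof.
move=> H us Uus cus.
pose E (p : X * R) := 0 <= p.2 <= 1 /\ forall e, 0 < e -> forall N, exists n,
  (N <= n)%N /\ exists q, endo (val (us n)) q /\ dbar d p q < e.
have Eclos : forall p, 0 <= p.2 <= 1 ->
    (forall e, 0 < e -> exists p', E p' /\ dbar d p p' < e) -> E p.
  move=> p p01 Hp; split => // e e0 N.
  have e2 : 0 < e / 2 by rewrite divr_gt0.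
  have [p' [[_ Ep'] hp']] := Hp _ e2.
  have [n [Nn [q [eq hq]]]] := Ep' _ e2 N.
  exists n; split => //; exists q; split => //; have := dbarT p p' q; lra.
have Edown : forall x t s, E (x, t) -> 0 <= s <= t -> E (x, s).
  move=> x t s [/= /andP [t0 t1] Et] /andP [s0 st]; split.
    by rewrite /= s0 /=; lra.
  move=> e e0 N; have [n [Nn [[y r] [/endoE [/andP [r0 r1] ry] hq]]]] := Et e e0 N.
  exists n; split => //; rewrite dbarE in hq; case: (leP r s) => rs.
    exists (y, r); split; first by rewrite endoE r0 r1.
    have rt : r <= t by lra.
    rewrite dbarE; rewrite !ger0_norm ?subr_ge0 // in hq *; lra.
  exists (y, s); split.
    by rewrite endoE; split; [apply/andP; split; lra | lra].
  by rewrite dbarE subrr normr0 addr0; have := normr_ge0 (t - r); lra.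
have E0 : forall x, E (x, 0).
  move=> x; split; first by rewrite /= lexx ler01.
  move=> e e0 N; exists N; split => //; exists (x, 0); split; first exact: endo0.
  by rewrite dbarE d0 subrr normr0 addr0.
pose Sx x := [set t | E (x, t)].
have hsup : forall x, has_sup (Sx x).
  move=> x; split; first by exists 0; exact: E0.
  by exists 1 => t [/andP [_ t1] _].
pose uf x := sup (Sx x).
have ufub : forall x t, E (x, t) -> t <= uf x.
  by move=> x t Et; exact: sup_upper_bound (hsup x) _ Et.
have uf01 : forall x, 0 <= uf x <= 1.
  move=> x; apply/andP; split; first exact: ufub (E0 x).
  by apply: ge_sup; [exists 0; exact: E0 | move=> t [/andP [_ t1] _]].
have Euf : forall x, E (x, uf x).
  move=> x; apply: Eclos; first exact: uf01.
  move=> e e0; have [t St ht] := sup_adherent e0 (hsup x).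
  exists (x, t); split => //; rewrite dbarE d0 add0r ger0_norm ?subr_ge0 ?ufub //.
  by rewrite ltrBlDr -ltrBlDl.
have endoEq : forall p, endo uf p <-> E p.
  move=> [x t]; split.
    by move=> /endoE [/andP [t0 t1] tu]; apply: Edown (Euf x) _; rewrite t0.
  by move=> Et; rewrite endoE; split; [case: Et | exact: ufub].
have [z Ez1] : exists z, E (z, 1).
  have hx : forall n, exists x, 1 <= val (us n) x by move=> n; exact: one_of.
  have [xs hxs] := choice hx.
  have h01 : 0 < (1:R) <= 1 by rewrite ltr01 lexx.
  have [z cl] := H 1 h01 xs (fun n => UcutI (Uus n) ltr01 (hxs n)).
  exists z; split; first by rewrite /= ler01 lexx.
  move=> e e0 N; have [n [Nn hn]] := cl e e0 N.
  exists n; split => //; exists (xs n, 1); split.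
    by rewrite endoE ler01 lexx hxs.
  by rewrite dbarE subrr normr0 addr0 dC.
have uz : 1 <= uf z := ufub _ _ Ez1.
have cutpos : forall a, 0 < a -> a <= 1 -> cut d uf a = [set x | E (x, a)].
  move=> a a0 a1; rewrite cutE ?gt_eqF //; apply/seteqP; split => x /=.
    by move=> ax; apply: Edown (Euf x) _; rewrite ltW.
  exact: ufub.
have closedE : forall a, 0 < a -> a <= 1 -> dclosed (dE d) [set x | E (x, a)].
  move=> a a0 a1 x nx; apply: contrapT => Hn; apply: nx; apply: Eclos.
    by rewrite /= ltW.
  move=> e e0; apply: contrapT => H2; apply: Hn; exists e; split => // y /= hy Ey.
  apply: H2; exists (y, a); split => //.
  by rewrite dbarE subrr normr0 addr0 -lte_fin.
have seqE : forall a, 0 < a -> a <= 1 -> seqrc d [set x | E (x, a)].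
  move=> a a0 a1 xs Exs.
  have a2 : 0 < a / 2 by rewrite divr_gt0.
  have a2' : 0 < a / 2 <= 1 by rewrite a2 /=; lra.
  have hny : forall k, exists y, Ucut U (a / 2) y /\ d (xs k) y < rk k.
    move=> k; have [ep0 [ep1 ep2]] := minP a2 (rk_gt0 (R:=R) k).
    have [_ Ek] := Exs k.
    have [n [_ [[y s] [/endoE [_ sy] hq]]]] := Ek _ ep0 0%N.
    rewrite dbarE in hq.
    have [hs1 hs2] := absl (le_lt_trans (ler_wpDl (d_ge0 _ _) (lexx _)) hq).
    exists y; split; last by have := normr_ge0 (a - s); lra.
    apply: (UcutI (Uus n) a2); lra.
  have [ys hys] := choice hny.
  have [w cl] := H _ a2' ys (fun k => (hys k).1).
  exists w; apply: (cluster_shadow (ny := fun k => (k, ys k))) => // k.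
  by split => //=; exact: (hys k).2.
have Fuf : F_USCG d uf.
  split; first split.
  - exact: uf01.
  - move=> a /andP [a0 a1]; case: (eqVneq a 0) => [->|an0].
      rewrite /cut eqxx; split; last exact: (closure_closed dT).
      exists z; apply: (sub_closure d0); rewrite /=; lra.
    have a0' : 0 < a by rewrite lt0r an0.
    rewrite cutpos //; split; last exact: closedE.
    by exists z; apply: Edown (Euf z) _; rewrite a0 (le_trans a1 uz).
  - move=> a /andP [a0 a1]; rewrite cutpos //.
    rewrite -(closed_closureE d0 (closedE a a0 a1)).
    exact: (seqrc_relcompact dC dT (seqE a a0 a1)).
pose ufs : FUSCG d := exist _ uf Fuf.
exists ufs => e e0.
have e4 : 0 < e / 4 by rewrite divr_gt0.
have [ε [ε0 εe]] : exists ε : R, 0 < ε /\ 4 * ε = e by exists (e / 4); split => //; lra.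
have [N hN] := cus ε ε0.
exists N => n Nn.
suff : h (us n) ufs <= 3 * ε by lra.
apply/h_le; split.
- move=> [x t] /endoE [/andP [t0 t1] tu] e' e'0.
  case: (lerP t (2 * ε)) => t2.
    exists (x, 0); split; first exact: (endo0 ufs).
    rewrite dbarE d0 subr0 add0r ger0_norm //; lra.
  have hm : forall m, exists y, d x y < ε /\ t - ε <= val (us (maxn m N)) y.
    move=> m; have hnm := hN n (maxn m N) Nn (leq_maxr _ _).
    have ext : endo (val (us n)) (x, t) by rewrite endoE t0 t1.
    have [[y s] [/endoE [_ sy] hb]] := h_lt hnm ext.
    rewrite dbarE in hb.
    have [hs1 hs2] := absl (le_lt_trans (ler_wpDl (d_ge0 _ _) (lexx _)) hb).
    exists y; split; first by have := normr_ge0 (t - s); lra.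
    lra.
  have [ys hys] := choice hm.
  have εa : 0 < ε <= 1 by rewrite ε0 /=; lra.
  have Uys : forall m, Ucut U ε (ys m).
    move=> m; apply: (UcutI (Uus (maxn m N)) ε0); have := (hys m).2; lra.
  have [w cl] := H ε εa ys Uys.
  have Ew : E (w, t - ε).
    split; first by rewrite /=; apply/andP; split; lra.
    move=> e'' e''0 N''; have [m [hm1 hm2]] := cl e'' e''0 (maxn N'' N).
    exists m; split; first exact: leq_trans (leq_maxl _ _) hm1.
    exists (ys m, t - ε); split.
      have hmN : maxn m N = m by apply/maxn_idPl; exact: leq_trans (leq_maxr _ _) hm1.
      have := (hys m).2; rewrite hmN => hy.
      by rewrite endoE; split => //; apply/andP; split; lra.
    by rewrite dbarE subrr normr0 addr0 dC.
  exists (w, t - ε); split; first by apply/endoEq.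
  have [m [_ hm']] := cl e' e'0 0%N.
  rewrite dbarE opprB addrCA subrr addr0 ger0_norm ?ltW //.
  have := dT x (ys m) w; have := (hys m).1; lra.
- move=> p /endoEq [p01 Ep] e' e'0.
  have e2 : 0 < e' / 2 by rewrite divr_gt0.
  have [n' [Nn' [q [eq hq]]]] := Ep _ e2 N.
  have hnn := hN n' n Nn' Nn.
  have [b [eb hb]] := h_lt hnn eq.
  exists b; split => //; have := dbarT p q b; lra.
Qed.

Lemma backward (U : set (FUSCG d)) :
  (forall a, 0 < a <= 1 -> drelcompact (dE d) (Ucut U a)) ->
  drelcompact (@H_end_FUSCG R X d) U.
Proof.
move=> H; rewrite HendE.
have sX : forall a, 0 < a <= 1 -> seqrc d (Ucut U a).
  by move=> a ha; apply: (relcompact_seqrc d0 dC dT); exact: H a ha.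
apply: (tb_cc_relcompact hC hT); [exact: tb_U | exact: cc_U].
Qed.

End Main.

Unset Implicit Arguments.
Set Strict Implicit.

Theorem theorem5p9 (R : realType) (X : Type) (d : X -> X -> R)
  (hd : is_metric d) (U : set (FUSCG d)) :
  drelcompact (@H_end_FUSCG R X d) U <->
  (forall a : R, 0 < a <= 1 -> drelcompact (dE d) (Ucut U a)).
Proof. by split; [exact: forward | exact: backward]. Qed.
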